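(* Let $\alpha>0$, $\theta>1$ be fixed reals, let $k\ge2$ be an integer and let $\rho$ be a positive real with $\rho<(k+3)^{-1}$. Let $N,\xi$ be reals with \[N^{3\rho-k}<\lvert\xi\rvert\le N^{\rho-\theta}.\] Then, provided $N$ is sufficiently large, there exist coprime $a,b\in\mathbb{Z}$ with \[\Big\lvert\xi\alpha-\frac ab\Big\rvert\le b^{-2}\quad\text{and}\quad N^{2\rho}\le b\le N^{k-2\rho}.\] *)

(* Defs.v *)
From Stdlib Require Import Reals ZArith.
Open Scope R_scope.

(* Main.v *)
From Stdlib Require Import Reals Rpower ZArith List Lia Lra Classical.
Open Scope R_scope.

Lemma pigeon (f : nat -> nat) (M : nat) :
  (forall j, (j <= M)%nat -> (f j < M)%nat) ->
  exists i j, (j < i <= M)%nat /\ f i = f j.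
Proof.
  intros Hf.
  apply NNPP; intro H.
  assert (HN : NoDup (map f (seq 0 (S M)))).
  { apply NoDup_map_NoDup_ForallPairs; [|apply seq_NoDup].
    intros a b Ha Hb Hab.
    apply in_seq in Ha; apply in_seq in Hb.
    destruct (Nat.lt_trichotomy a b) as [h|[h|h]]; auto.
    - exfalso; apply H; exists b, a; split; [lia|auto].
    - exfalso; apply H; exists a, b; split; [lia|auto]. }
  assert (Hi : incl (map f (seq 0 (S M))) (seq 0 M)).
  { intros y Hy. apply in_map_iff in Hy. destruct Hy as [j [<- Hj]].
    apply in_seq in Hj. apply in_seq. specialize (Hf j). lia. }
  pose proof (NoDup_incl_length HN Hi) as L.
  rewrite length_map, !length_seq in L. lia.
Qed.

Definition fr (y : R) := y - IZR (Int_part y).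

Lemma fr_bounds y : 0 <= fr y < 1.
Proof. unfold fr. pose proof (base_Int_part y). lra. Qed.

Lemma dirichlet0 (x : R) (M : nat) : (1 <= M)%nat ->
  exists a b : Z, (1 <= b)%Z /\ IZR b <= INR M /\
    Rabs (IZR b * x - IZR a) < / INR M.
Proof.
  intros HM.
  assert (HMp : 0 < INR M) by (apply lt_0_INR; lia).
  set (g := fun j : nat => Int_part (INR M * fr (INR j * x))).
  assert (Hg : forall j, (0 <= g j < Z.of_nat M)%Z).
  { intro j. unfold g. set (y := INR M * fr (INR j * x)).
    pose proof (fr_bounds (INR j * x)).
    assert (0 <= y < INR M) by (unfold y; split; nra).
    pose proof (base_Int_part y) as [B1 B2].
    split.
    - assert (IZR (-1) < IZR (Int_part y)) by lra.
      apply lt_IZR in H1. lia.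
    - apply lt_IZR. rewrite <- INR_IZR_INZ. lra. }
  destruct (pigeon (fun j => Z.to_nat (g j)) M) as [i [j [Hij Heq]]].
  { intros j _. specialize (Hg j). lia. }
  assert (Eg : g i = g j).
  { apply Z2Nat.inj; try apply Hg; auto. }
  exists (Int_part (INR i * x) - Int_part (INR j * x))%Z, (Z.of_nat i - Z.of_nat j)%Z.
  split; [lia|]. split.
  { rewrite minus_IZR, <- !INR_IZR_INZ.
    assert (0 <= INR j) by apply pos_INR.
    assert (INR i <= INR M) by (apply le_INR; lia). lra. }
  rewrite !minus_IZR, <- !INR_IZR_INZ.
  assert (Hb : forall r, IZR (Int_part (INR M * r)) <= INR M * r /\ INR M * r < IZR (Int_part (INR M * r)) + 1).
  { intro r. pose proof (base_Int_part (INR M * r)). lra. }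
  pose proof (Hb (fr (INR i * x))) as Hi. pose proof (Hb (fr (INR j * x))) as Hj.
  fold (g i) in Hi. fold (g j) in Hj. rewrite Eg in Hi.
  unfold fr in Hi, Hj.
  set (u := IZR (Int_part (INR i * x))) in *.
  set (v := IZR (Int_part (INR j * x))) in *.
  set (c := IZR (g j)) in *.
  assert (Hd : Rabs (INR M * ((INR i - INR j) * x - (u - v))) < 1).
  { apply Rabs_def1; lra. }
  rewrite Rabs_mult, (Rabs_right (INR M)) in Hd by lra.
  apply (Rmult_lt_reg_l (INR M)); auto. rewrite Rinv_r; lra.
Qed.

Lemma dirichlet (x : R) (M : nat) : (1 <= M)%nat ->
  exists a b : Z, Z.gcd a b = 1%Z /\ (1 <= b)%Z /\ IZR b <= INR M /\
    Rabs (IZR b * x - IZR a) < / INR M.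
Proof.
  intros HM. destruct (dirichlet0 x M HM) as [a [b [H1 [H2 H3]]]].
  set (g := Z.gcd a b).
  assert (Hgp : (0 < g)%Z).
  { pose proof (Z.gcd_nonneg a b). assert (g <> 0%Z).
    { intro E. apply Z.gcd_eq_0 in E. lia. } unfold g in *; lia. }
  destruct (Z.gcd_divide_r a b) as [b' Eb]. destruct (Z.gcd_divide_l a b) as [a' Ea].
  fold g in Eb, Ea.
  assert (Ha' : (a / g = a')%Z) by (rewrite Ea; apply Z.div_mul; lia).
  assert (Hb' : (b / g = b')%Z) by (rewrite Eb; apply Z.div_mul; lia).
  exists a', b'. split.
  { rewrite <- Ha', <- Hb'. apply Z.gcd_div_gcd; [lia|reflexivity]. }
  assert (1 <= b')%Z by nia.
  assert (b' <= b)%Z by nia.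
  split; [auto|]. split.
  { apply IZR_le in H0. lra. }
  rewrite Ea, Eb in H3. rewrite !mult_IZR in H3.
  assert (1 <= IZR g) by (apply IZR_le; lia).
  replace (IZR b' * IZR g * x - IZR a' * IZR g) with (IZR g * (IZR b' * x - IZR a')) in H3 by ring.
  rewrite Rabs_mult, (Rabs_right (IZR g)) in H3 by lra.
  pose proof (Rabs_pos (IZR b' * x - IZR a')). nra.
Qed.

Lemma exp_ge_of_ln (y c : R) : 0 < c -> ln c <= y -> c <= exp y.
Proof.
  intros Hc H. rewrite <- (exp_ln c) by auto.
  destruct (Rle_lt_or_eq_dec _ _ H) as [h|h].
  - left; apply exp_increasing; auto.
  - rewrite h; lra.
Qed.

Theorem lemma5p6 (alpha theta rho : R) (k : nat) :
  0 < alpha -> 1 < theta -> (2 <= k)%nat ->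
  0 < rho -> rho < / (INR k + 3) ->
  exists N0 : R, 0 < N0 /\
    forall N xi : R, N0 <= N ->
      Rpower N (3 * rho - INR k) < Rabs xi ->
      Rabs xi <= Rpower N (rho - theta) ->
      exists a b : Z,
        Z.gcd a b = 1%Z /\
        Rabs (xi * alpha - IZR a / IZR b) <= / (IZR b ^ 2) /\
        Rpower N (2 * rho) <= IZR b /\
        IZR b <= Rpower N (INR k - 2 * rho).
Proof.
  intros Ha Ht Hk Hr Hrk.
  assert (Hk2 : 2 <= INR k) by (replace 2 with (INR 2) by (simpl; lra); apply le_INR; auto).
  assert (Hr5 : rho < / 5).
  { apply (Rlt_le_trans _ _ _ Hrk). apply Rinv_le_contravar; lra. }
  assert (Hr5' : 5 * rho < 1).
  { apply (Rmult_lt_compat_l 5) in Hr5; [|lra]. rewrite Rinv_r in Hr5; lra. }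
  set (L := Rmax (ln 2) (Rmax (ln (2 / alpha) / rho) (ln (2 * alpha) / (theta - 3 * rho)))).
  exists (exp L). split; [apply exp_pos|].
  intros N xi HN Hlo Hhi.
  assert (HNp : 0 < N) by (pose proof (exp_pos L); lra).
  set (t := ln N).
  assert (HtL : L <= t).
  { destruct (Rle_lt_dec L t) as [h|h]; auto. exfalso.
    apply exp_increasing in h. unfold t in h. rewrite exp_ln in h; lra. }
  assert (T1 : ln 2 <= t) by (eapply Rle_trans; [apply Rmax_l|exact HtL]).
  assert (T2 : ln (2 / alpha) <= rho * t).
  { assert (ln (2 / alpha) / rho <= t).
    { eapply Rle_trans; [|exact HtL]. eapply Rle_trans; [|apply Rmax_r]. apply Rmax_l. }
    apply (Rmult_le_compat_l rho) in H; [|lra].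
    replace (rho * (ln (2 / alpha) / rho)) with (ln (2/alpha)) in H by (field; lra). lra. }
  assert (T3 : ln (2 * alpha) <= (theta - 3 * rho) * t).
  { assert (ln (2 * alpha) / (theta - 3 * rho) <= t).
    { eapply Rle_trans; [|exact HtL]. eapply Rle_trans; [|apply Rmax_r]. apply Rmax_r. }
    apply (Rmult_le_compat_l (theta - 3 * rho)) in H; [|lra].
    replace ((theta - 3 * rho) * (ln (2 * alpha) / (theta - 3 * rho))) with (ln (2 * alpha)) in H by (field; lra). lra. }
  assert (Hln2 : 0 < ln 2) by (rewrite <- ln_1; apply ln_increasing; lra).
  assert (Ht0 : 0 < t) by lra.
  unfold Rpower in Hlo, Hhi |- *. fold t in Hlo, Hhi |- *.
  set (Q := exp ((INR k - 2 * rho) * t)).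
  assert (HQ2 : 2 <= Q).
  { unfold Q. apply exp_ge_of_ln; [lra|]. nra. }
  pose proof (base_Int_part Q) as [B1 B2].
  set (z := Int_part Q) in *.
  assert (Hz : (2 <= z)%Z).
  { assert (IZR 1 < IZR z) by (simpl; lra). apply lt_IZR in H. lia. }
  set (M := Z.to_nat z).
  assert (HMz : INR M = IZR z) by (unfold M; rewrite INR_IZR_INZ; f_equal; apply Z2Nat.id; lia).
  assert (HM1 : (1 <= M)%nat) by (unfold M; lia).
  destruct (dirichlet (xi * alpha) M HM1) as [a [b [Hg [Hb1 [HbM He]]]]].
  exists a, b. split; [auto|].
  assert (HB : 1 <= IZR b) by (apply IZR_le; lia).
  rewrite HMz in HbM, He.
  set (B := IZR b) in *.
  set (X := xi * alpha) in *.
  assert (HinvM : / IZR z <= / B) by (apply Rinv_le_contravar; lra).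
  split.
  { replace (X - IZR a / B) with ((B * X - IZR a) * / B) by (field; lra).
    rewrite Rabs_mult, Rabs_inv, (Rabs_right B) by lra.
    replace (/ (B ^ 2)) with (/ B * / B) by (field; lra).
    apply Rmult_le_compat_r; [left; apply Rinv_0_lt_compat; lra|lra]. }
  split; [|lra].
  destruct (Rle_lt_dec (exp (2 * rho * t)) B) as [h|h]; auto. exfalso.
  assert (HXa : Rabs X = Rabs xi * alpha) by (unfold X; rewrite Rabs_mult, (Rabs_right alpha); lra).
  assert (HBX : Rabs (B * X) = B * Rabs X) by (rewrite Rabs_mult, (Rabs_right B); lra).
  destruct (Z.eq_dec a 0) as [Ha0|Ha0].
  - rewrite Ha0 in He. rewrite Rminus_0_r in He. rewrite HBX in He.
    set (P := exp ((2 * rho - INR k) * t)).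
    assert (HPQ : P * Q = 1).
    { unfold P, Q. rewrite <- exp_plus. replace (_ + _) with 0 by ring. apply exp_0. }
    assert (HE : exp ((3 * rho - INR k) * t) = exp (rho * t) * P).
    { unfold P; rewrite <- exp_plus; f_equal; ring. }
    assert (HE1 : 2 / alpha <= exp (rho * t)) by (apply exp_ge_of_ln; [apply Rdiv_lt_0_compat; lra|lra]).
    assert (HP : 0 < P) by apply exp_pos.
    assert (HiM : / IZR z <= 2 * P).
    { assert (IZR z * (2 * P) >= 1) by nra.
      apply (Rmult_le_reg_l (IZR z)); [lra|]. rewrite Rinv_r; lra. }
    assert (alpha * exp (rho * t) >= 2).
    { apply (Rmult_le_compat_l alpha) in HE1; [|lra]. unfold Rdiv in HE1.
      replace (alpha * (2 * / alpha)) with 2 in HE1 by (field; lra). lra. }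
    rewrite HE in Hlo.
    assert (Rabs X > 2 * P) by nra.
    pose proof (Rabs_pos X). assert (0 <= (B - 1) * Rabs X) by (apply Rmult_le_pos; lra).
    nra.
  - assert (Hia : 1 <= Rabs (IZR a)).
    { destruct (Z_lt_le_dec a 0).
      + assert (IZR a <= -1) by (apply IZR_le; lia). rewrite Rabs_left; lra.
      + assert (1 <= IZR a) by (apply IZR_le; lia). rewrite Rabs_right; lra. }
    assert (HiM : / IZR z <= / 2) by (apply Rinv_le_contravar; [lra|apply IZR_le; lia]).
    assert (Htri : Rabs (IZR a) <= Rabs (B * X) + Rabs (B * X - IZR a)).
    { replace (IZR a) with (B * X - (B * X - IZR a)) at 1 by ring. apply Rabs_triang_inv2 || apply Rabs_minus_le || idtac.
      pose proof (Rabs_triang (B * X) (- (B * X - IZR a))). rewrite Rabs_Ropp in H.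
      replace (B * X - (B * X - IZR a)) with (B * X + - (B * X - IZR a)) by ring. lra. }
    assert (Rabs (B * X) > / 2) by lra.
    rewrite HBX, HXa in H.
    set (F := exp ((3 * rho - theta) * t)).
    set (G := exp ((theta - 3 * rho) * t)).
    assert (HFG : F * G = 1).
    { unfold F, G. rewrite <- exp_plus. replace (_ + _) with 0 by ring. apply exp_0. }
    assert (HE : exp (2 * rho * t) * exp ((rho - theta) * t) = F).
    { unfold F; rewrite <- exp_plus; f_equal; ring. }
    assert (HG : 2 * alpha <= G) by (apply exp_ge_of_ln; lra).
    assert (HF : 0 < F) by apply exp_pos.
    assert (HaF : alpha * F <= / 2).
    { apply (Rmult_le_reg_l 2); [lra|]. rewrite Rinv_r by lra. nra. }
    assert (Hxi0 : 0 <= Rabs xi) by apply Rabs_pos.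
    assert (B * Rabs xi <= exp (2 * rho * t) * exp ((rho - theta) * t)).
    { apply Rmult_le_compat; lra. }
    rewrite HE in H0. nra.
Qed.
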